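(* Let $n_0,n_1$ be positive integers and let $(\eta,\omega)=((\eta_\ell)_{\ell\ge1},(\omega_\ell)_{\ell\ge1})$ be a pair of nonnegative integer sequences with finite support. The pair of conditions [(a) $\mathsf{K}^+=0$, and (b) $\mathsf{K}^+_\ell\ge|\mathsf{K}^-_\ell|$ for every $\ell\ge1$] is equivalent to the following conditions: (i) $\sum_{\ell\ge1}\frac{\eta_\ell+\omega_\ell}{(n_0+n_1)^\ell}=1$; (ii) $\sum_{\ell\ge1}\frac{\eta_\ell-\omega_\ell}{(n_0-n_1)^\ell}=1$ whenever $n_0\ne n_1$; (iii) for every $\ell\ge1$, $\sum_{i\ge1}\frac{\eta_{\ell+i}+\omega_{\ell+i}}{(n_0+n_1)^i}\ge|\eta_\ell-\omega_\ell|$ if $n_0=n_1$, and $\sum_{i\ge1}\frac{\eta_{\ell+i}+\omega_{\ell+i}}{(n_0+n_1)^i}\ge\Bigl|\sum_{i\ge1}\frac{\eta_{\ell+i}-\omega_{\ell+i}}{(n_0-n_1)^i}\Bigr|$ if $n_0\ne n_1$.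
   Context: For integers $n,\ell>0$ and a finite-support integer sequence $\mu=(\mu_i)_{i\ge1}$, $\mathsf{K}_\ell(\mu,n)=n^\ell-\sum_{i=1}^{\ell}\mu_i n^{\ell-i}$ (with $0^0=1$). Define $\mathsf{K}^+_\ell=\mathsf{K}_\ell(\eta+\omega,n_0+n_1)$, $\mathsf{K}^-_\ell=\mathsf{K}_\ell(\eta-\omega,n_0-n_1)$, let $\mathsf{r}$ be the largest index in the union of the supports of $\eta$ and $\omega$, and $\mathsf{K}^\pm=\mathsf{K}^\pm_{\mathsf{r}}$. *)

(* Defs.v *)
From mathcomp Require Import all_boot all_order all_algebra.
Set Implicit Arguments. Unset Strict Implicit. Unset Printing Implicit Defensive.
Import Order.TTheory GRing.Theory Num.Theory.
Local Open Scope ring_scope.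

(* Sequences (mu_i)_{i>=1} are functions nat -> _ ; the value at index 0 is never used. *)

(* K_l(mu, n) = n^l - sum_{i=1}^l mu_i n^(l-i)   (with 0^0 = 1, as n ^+ 0 = 1) *)
Definition K (mu : nat -> int) (n : int) (l : nat) : int :=
  n ^+ l - \sum_(1 <= i < l.+1) mu i * n ^+ (l - i).

Definition Kplus (eta omega : nat -> nat) (n0 n1 : nat) (l : nat) : int :=
  K (fun i => (eta i + omega i)%:Z) (n0%:Z + n1%:Z) l.

Definition Kminus (eta omega : nat -> nat) (n0 n1 : nat) (l : nat) : int :=
  K (fun i => (eta i)%:Z - (omega i)%:Z) (n0%:Z - n1%:Z) l.

(* r = largest index l >= 1 in supp(eta) U supp(omega), computed using a bound N
   beyond which eta and omega vanish (0 if both sequences are identically zero). *)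
Definition last_supp (eta omega : nat -> nat) (N : nat) : nat :=
  (\max_(1 <= l < N.+1 | eta l + omega l != 0) l)%N.

Definition sum_plus (eta omega : nat -> nat) (n0 n1 N : nat) : rat :=
  \sum_(1 <= l < N.+1) (eta l + omega l)%:R / (n0 + n1)%:R ^+ l.

Definition sum_minus (eta omega : nat -> nat) (n0 n1 N : nat) : rat :=
  \sum_(1 <= l < N.+1) ((eta l)%:R - (omega l)%:R) / (n0%:R - n1%:R) ^+ l.

Definition tail_plus (eta omega : nat -> nat) (n0 n1 N l : nat) : rat :=
  \sum_(1 <= i < N.+1) (eta (l + i) + omega (l + i))%:R / (n0 + n1)%:R ^+ i.

Definition tail_minus (eta omega : nat -> nat) (n0 n1 N l : nat) : rat :=
  \sum_(1 <= i < N.+1) ((eta (l + i))%:R - (omega (l + i))%:R) / (n0%:R - n1%:R) ^+ i.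

(* Main.v *)
Require Import Defs.
From mathcomp Require Import all_boot all_order all_algebra.
From mathcomp Require Import ring lra.
Import Order.TTheory GRing.Theory Num.Theory.
Local Open Scope ring_scope.

Lemma Kid (R : fieldType) (mu : nat -> R) (n : R) N l : n != 0 ->
  (forall i, (N < i)%N -> mu i = 0) ->
  n ^+ l - \sum_(1 <= i < l.+1) mu i * n ^+ (l - i) =
  n ^+ l * (1 - \sum_(1 <= i < N.+1) mu i / n ^+ i) +
  \sum_(1 <= i < N.+1) mu (l + i) / n ^+ i.
Proof.
move=> nz Hmu.
set f := fun i => mu i * (n ^+ l / n ^+ i).
have E1 : \sum_(1 <= i < l.+1) mu i * n ^+ (l - i) = \sum_(1 <= i < l.+1) f i.
  apply: eq_big_nat => k /andP[_ Hi]; by rewrite /f expfB_cond // (negPf nz).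
have E2 : n ^+ l * \sum_(1 <= i < N.+1) mu i / n ^+ i = \sum_(1 <= i < N.+1) f i.
  rewrite mulr_sumr; apply: eq_bigr => k _; rewrite /f mulrA [n ^+ l * _]mulrC -!mulrA.
  by [].
have E3 : \sum_(l.+1 <= i < (l + N).+1) f i = \sum_(1 <= i < N.+1) f (i + l).
  by rewrite -{1}add1n big_addn subSn ?leq_addr // addKn.
have E4 : \sum_(1 <= i < N.+1) mu (l + i) / n ^+ i = \sum_(l.+1 <= i < (l + N).+1) f i.
  rewrite E3; apply: eq_bigr => k _; rewrite /f (_ : (k + l)%R = (l + k)%N) ?exprD; last by rewrite addnC.
  field.
  by rewrite !expf_neq0.
have E5 : \sum_(1 <= i < (l + N).+1) f i = \sum_(1 <= i < N.+1) f i.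
  rewrite (@big_cat_nat _ _ _ N.+1) //=; last by rewrite ltnS leq_addl.
  rewrite [X in _ + X]big1_seq ?addr0 // => k /andP[_].
  by rewrite mem_index_iota => /andP[Hk _]; rewrite /f Hmu ?mul0r.
have E6 : \sum_(1 <= i < (l + N).+1) f i = \sum_(1 <= i < l.+1) f i + \sum_(l.+1 <= i < (l + N).+1) f i.
  by rewrite (@big_cat_nat _ _ _ l.+1) // ltnS leq_addr.
rewrite mulrBr mulr1 E2 E1 E4 -E5 E6; ring.
Qed.

Lemma Kplus_rat eta omega n0 n1 N l : (0 < n0)%N ->
  (forall l, (N < l)%N -> eta l = 0%N /\ omega l = 0%N) ->
  (Kplus eta omega n0 n1 l)%:~R =
  (n0 + n1)%:R ^+ l * (1 - sum_plus eta omega n0 n1 N) + tail_plus eta omega n0 n1 N l :> rat.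
Proof.
move=> n0p HN.
rewrite /Kplus /K /sum_plus /tail_plus rmorphB rmorph_sum /= rmorphXn rmorphD /=.
under eq_bigr do rewrite rmorphM rmorphXn rmorphD /= -!pmulrn.
rewrite -!pmulrn -natrD.
apply: Kid; first by rewrite pnatr_eq0 addn_eq0 negb_and -lt0n n0p.
by move=> i /HN [-> ->].
Qed.

Lemma Kminus_rat eta omega n0 n1 N l : n0 != n1 ->
  (forall l, (N < l)%N -> eta l = 0%N /\ omega l = 0%N) ->
  (Kminus eta omega n0 n1 l)%:~R =
  (n0%:R - n1%:R) ^+ l * (1 - sum_minus eta omega n0 n1 N) + tail_minus eta omega n0 n1 N l :> rat.
Proof.
move=> ne HN.
rewrite /Kminus /K /sum_minus /tail_minus rmorphB rmorph_sum /= rmorphXn rmorphB /=.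
under eq_bigr do rewrite rmorphM rmorphXn !rmorphB /= -!pmulrn.
rewrite -!pmulrn.
apply: Kid; first by rewrite subr_eq0 eqr_nat.
by move=> i /HN [-> ->]; rewrite subrr.
Qed.

Lemma Kminus_eq eta omega n l : (1 <= l)%N ->
  Kminus eta omega n n l = - ((eta l)%:Z - (omega l)%:Z).
Proof.
case: l => // l _.
rewrite /Kminus /K subrr expr0n /= sub0r big_nat_recr //= subnn expr0 mulr1.
rewrite big1_seq ?add0r // => i /andP[_]; rewrite mem_index_iota => /andP[_ Hi].
by rewrite subSn // expr0n /= mulr0.
Qed.

Lemma last_supp_after eta omega N j :
  (forall l, (N < l)%N -> eta l = 0%N /\ omega l = 0%N) ->
  (last_supp eta omega N < j)%N -> (eta j + omega j = 0)%N.
Proof.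
move=> HN Hj; apply/eqP; apply/negP => /negP Hnz.
case: (ltnP N j) => [/HN [E1 E2]|HjN]; first by move: Hnz; rewrite E1 E2.
have : (j <= last_supp eta omega N)%N.
  rewrite /last_supp; apply: (@leq_bigmax_seq _ _ _ (fun l => l)) => //.
  by rewrite mem_index_iota ltnS HjN andbT; apply: leq_ltn_trans Hj.
by rewrite leqNgt Hj.
Qed.

Lemma tail_plus_last eta omega n0 n1 N :
  (forall l, (N < l)%N -> eta l = 0%N /\ omega l = 0%N) ->
  tail_plus eta omega n0 n1 N (last_supp eta omega N) = 0.
Proof.
move=> HN; rewrite /tail_plus big1_seq // => i /andP[_]; rewrite mem_index_iota => /andP[Hi _].
by rewrite (@last_supp_after eta omega N) // ?mul0r // -addn1 leq_add2l.
Qed.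

Lemma tails_big eta omega n0 n1 N l :
  (forall l, (N < l)%N -> eta l = 0%N /\ omega l = 0%N) -> (N <= l)%N ->
  tail_plus eta omega n0 n1 N l = 0 /\ tail_minus eta omega n0 n1 N l = 0.
Proof.
move=> HN Hl; split.
  rewrite /tail_plus big1_seq // => i /andP[_]; rewrite mem_index_iota => /andP[Hi _].
  have [|-> ->] := HN (l + i)%N; first by rewrite -addn1 leq_add.
  by rewrite mul0r.
rewrite /tail_minus big1_seq // => i /andP[_]; rewrite mem_index_iota => /andP[Hi _].
have [|-> ->] := HN (l + i)%N; first by rewrite -addn1 leq_add.
  by rewrite subrr mul0r.
Qed.

Theorem lemma1 (n0 n1 : nat) (eta omega : nat -> nat) (N : nat) :
  (0 < n0)%N -> (0 < n1)%N ->
  (forall l, (N < l)%N -> eta l = 0%N /\ omega l = 0%N) ->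
  (Kplus eta omega n0 n1 (last_supp eta omega N) = 0 /\
   (forall l, (1 <= l)%N ->
      `|Kminus eta omega n0 n1 l| <= Kplus eta omega n0 n1 l))
  <->
  (sum_plus eta omega n0 n1 N = 1 /\
   (n0 != n1 -> sum_minus eta omega n0 n1 N = 1) /\
   (forall l, (1 <= l)%N ->
      if n0 == n1 then
        `|(eta l)%:R - (omega l)%:R : rat| <= tail_plus eta omega n0 n1 N l
      else
        `|tail_minus eta omega n0 n1 N l| <= tail_plus eta omega n0 n1 N l)).
Proof.
move=> n0p n1p HN.
set r := last_supp eta omega N.
have mnz : forall k, (n0 + n1)%:R ^+ k != 0 :> rat.
  by move=> k; rewrite expf_neq0 // pnatr_eq0 addn_eq0 negb_and -lt0n n0p.
have HKp := fun l => @Kplus_rat eta omega n0 n1 N l n0p HN.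
have Ha : Kplus eta omega n0 n1 r = 0 <-> sum_plus eta omega n0 n1 N = 1.
  split=> [/eqP|HS]; last apply/eqP; rewrite -(@intr_eq0 rat) HKp tail_plus_last // addr0.
    by rewrite mulf_eq0 (negPf (mnz _)) /= subr_eq0 => /eqP <-.
  by rewrite HS subrr mulr0.
have Hb : forall l, `|Kminus eta omega n0 n1 l| <= Kplus eta omega n0 n1 l <->
     `|(Kminus eta omega n0 n1 l)%:~R : rat| <= (Kplus eta omega n0 n1 l)%:~R.
  by move=> l; rewrite -intr_norm ler_int.
have [E|ne] := eqVneq n0 n1.
  subst n1.
  have HKm : forall l, (1 <= l)%N -> (Kminus eta omega n0 n0 l)%:~R = - ((eta l)%:R - (omega l)%:R) :> rat.
    by move=> l l1; rewrite Kminus_eq // rmorphN rmorphB /= -!pmulrn.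
  split.
    move=> [/Ha HS H]; split => //; split => // l l1.
    by move/Hb: (H l l1); rewrite HKm // normrN HKp HS subrr mulr0 add0r.
  move=> [HS [_ H]]; split; first by apply/Ha.
  by move=> l l1; apply/Hb; rewrite HKm // normrN HKp HS subrr mulr0 add0r; apply: H.
have HKm := fun l => @Kminus_rat eta omega n0 n1 N l ne HN.
have dnz : forall k, (n0%:R - n1%:R) ^+ k != 0 :> rat.
  by move=> k; rewrite expf_neq0 // subr_eq0 eqr_nat.
split.
  move=> [/Ha HS H]; split => //.
  have HSm : sum_minus eta omega n0 n1 N = 1.
    move/Hb: (H N.+1 isT).
    have [Tp Tm] := @tails_big eta omega n0 n1 N N.+1 HN (leqnSn N).
    rewrite HKp HKm Tp Tm HS subrr mulr0 !addr0 normr_le0 mulf_eq0 (negPf (dnz _)) /= subr_eq0.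
    by move/eqP <-.
  split => // l l1.
  by move/Hb: (H l l1); rewrite HKm HKp HS HSm !subrr !mulr0 !add0r.
move=> [HS [HSm H]]; split; first by apply/Ha.
move=> l l1; apply/Hb; rewrite HKm HKp HS (HSm isT) !subrr !mulr0 !add0r.
exact: H.
Qed.
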